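(* Any nested logit that satisfies Regularity and Richness is a random utility nested logit, i.e., it admits a nested logit representation in which $\eta_i\le 1$ for every $i\le K$.
   Context: Here the set of alternatives $X$ may be infinite, and $\mathscr{A}$ is the collection of nonempty finite subsets of $X$. A stochastic choice function is $p:X\times\mathscr{A}\to[0,1]$ with $\sum_{a\in A}p(a,A)=1$, $p(x,A)=0$ for $x\notin A$, $p(a,A)>0$ for $a\in A$; $A\cup y=A\cup\{y\}$. $a\sim_p b$ means $\frac{p(a,A)}{p(b,A)}=\frac{p(a,\{a,b\})}{p(b,\{a,b\})}$ for all $A\in\mathscr{A}$ containing $a,b$. Nested logit: there exist a finite partition $X_1,\dots,X_K$ of $X$, $u:X\to\mathbb{R}_{++}$ and $\eta_1,\dots,\eta_K>0$ such that for every $A\in\mathscr{A}$ and $a\in A\cap X_i$, $p(a,A)=\frac{\big(\sum_{x\in A\cap X_i}u(x)\big)^{\eta_i}}{\sum_{j:A\cap X_j\ne\emptyset}\big(\sum_{y\in A\cap X_j}u(y)\big)^{\eta_j}}\cdot\frac{u(a)}{\sum_{b\in A\cap X_i}u(b)}$. Regularity: $p(x,A\cup y)\le p(x,A)$ for all $A\in\mathscr{A}$, $x\in A$, $y\in X$. Richness: for any $a\in X$ and $\rho\in(0,1)$ there is $b\in X$ with $a\sim_p b$ and $p(a,\{a,b\})=\rho$. *)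

(* Defs.v *)
From HB Require Import structures.
From mathcomp Require Import all_boot all_order all_algebra.
From mathcomp Require Import finmap.
From mathcomp Require Import all_classical all_reals all_analysis.
Set Implicit Arguments. Unset Strict Implicit. Unset Printing Implicit Defensive.
Import Order.TTheory GRing.Theory Num.Theory.
Local Open Scope ring_scope.
Local Open Scope fset_scope.

Section NestedLogit.
Variables (R : realType) (X : choiceType).

Definition stochastic_choice (p : X -> {fset X} -> R) : Prop :=
  forall A : {fset X}, A != fset0 ->
    [/\ \sum_(a <- A) p a A = 1,
        (forall x, x \notin A -> p x A = 0) &
        (forall a, a \in A -> 0 < p a A)].

Definition block_sum (K : nat) (cls : X -> 'I_K) (u : X -> R)
    (A : {fset X}) (j : 'I_K) : R :=
  \sum_(x <- A | cls x == j) u x.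

(* p has the nested logit representation (X_j = cls^{-1}(j), j < K; u; eta) *)
Definition nested_logit_rep (p : X -> {fset X} -> R) (K : nat)
    (cls : X -> 'I_K) (u : X -> R) (eta : 'I_K -> R) : Prop :=
  [/\ (forall j : 'I_K, exists x, cls x = j),
      (forall x, 0 < u x),
      (forall j, 0 < eta j) &
      (forall A : {fset X}, A != fset0 -> forall a, a \in A ->
         p a A =
           powR (block_sum cls u A (cls a)) (eta (cls a)) /
           (\sum_(j < K | [fset x in A | cls x == j] != fset0)
               powR (block_sum cls u A j) (eta j))
           * (u a / block_sum cls u A (cls a)))].

Definition nested_logit (p : X -> {fset X} -> R) : Prop :=
  exists (K : nat) (cls : X -> 'I_K) (u : X -> R) (eta : 'I_K -> R),
    nested_logit_rep p cls u eta.

Definition random_utility_nested_logit (p : X -> {fset X} -> R) : Prop :=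
  exists (K : nat) (cls : X -> 'I_K) (u : X -> R) (eta : 'I_K -> R),
    nested_logit_rep p cls u eta /\ (forall j, eta j <= 1).

Definition sim_p (p : X -> {fset X} -> R) (a b : X) : Prop :=
  forall A : {fset X}, a \in A -> b \in A ->
    p a A / p b A = p a [fset a; b] / p b [fset a; b].

Definition regularity (p : X -> {fset X} -> R) : Prop :=
  forall A : {fset X}, A != fset0 -> forall x, x \in A -> forall y : X,
    p x (A `|` [fset y]) <= p x A.

Definition richness (p : X -> {fset X} -> R) : Prop :=
  forall (a : X) (rho : R), 0 < rho < 1 ->
    exists b : X, sim_p p a b /\ p a [fset a; b] = rho.

End NestedLogit.

(* Main.v *)
Require Import Defs.
From HB Require Import structures.
From mathcomp Require Import all_boot all_order all_algebra.
From mathcomp Require Import finmap.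
From mathcomp Require Import all_classical all_reals all_analysis.
From mathcomp Require Import ring lra.
Set Implicit Arguments. Unset Strict Implicit. Unset Printing Implicit Defensive.
Import Order.TTheory GRing.Theory Num.Theory.
Local Open Scope fset_scope.
Local Open Scope ring_scope.
Lemma half_neq1 (R : realType) : (1 : R) <> 1 / 2.
Proof. move=> h; lra. Qed.

Lemma lin_half (R : realType) (x y : R) : x * 2 = 1 * (x + y) -> y = x.
Proof. move=> h; lra. Qed.

Section Gen.
Variables (R : realType) (X : choiceType) (K : nat) (cls : X -> 'I_K) (u : X -> R).
Hypothesis upos : forall x, 0 < u x.

Lemma bs_list (f : X -> R) (A : {fset X}) (s : seq X) j : uniq s -> A =i s ->
  block_sum cls f A j = \sum_(z <- s | cls z == j) f z.
Proof.
move=> us As; rewrite /block_sum; apply: perm_big; apply: uniq_perm => //.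
Qed.

Lemma ne_list (A : {fset X}) (s : seq X) j : A =i s ->
  ([fset x in A | cls x == j] != fset0) = has (fun z => cls z == j) s.
Proof.
move=> As; apply/idP/idP.
  case/fset0Pn => z; rewrite !inE => /andP[zA cz]; apply/hasP; exists z => //.
  by rewrite -As.
case/hasP => z zs cz; apply/fset0Pn; exists z; rewrite !inE As zs //.
Qed.

Lemma sum1 (P : pred 'I_K) (G : 'I_K -> R) i : (forall j, P j = (j == i)) ->
  \sum_(j | P j) G j = G i.
Proof. by move=> HP; rewrite (eq_bigl _ _ HP) big_pred1_eq. Qed.

Lemma sum2 (P : pred 'I_K) (G : 'I_K -> R) i k : i != k ->
  (forall j, P j = (j == i) || (j == k)) ->
  \sum_(j | P j) G j = G i + G k.
Proof.
move=> ik HP; rewrite (bigD1 i) ?HP ?eqxx //=; congr (_ + _).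
apply: sum1 => j; rewrite HP; case: (eqVneq j i) => [->|] //=.
  by rewrite (negbTE ik).
by rewrite andbT.
Qed.

Lemma bs_ge0 (A : {fset X}) j : 0 <= block_sum cls u A j.
Proof. by apply: sumr_ge0 => z _; apply: ltW. Qed.

Lemma bs_gt0 (A : {fset X}) x : x \in A -> 0 < block_sum cls u A (cls x).
Proof.
move=> xA; rewrite /block_sum (big_rem x) //= eqxx.
apply: ltr_pwDl => //; apply: sumr_ge0 => z _; exact: ltW.
Qed.

Variable (eta : 'I_K -> R).
Definition Dn (A : {fset X}) := \sum_(j < K | [fset x in A | cls x == j] != fset0)
   powR (block_sum cls u A j) (eta j).

Lemma Dn_gt0 (A : {fset X}) x : x \in A -> 0 < Dn A.
Proof.
move=> xA; rewrite /Dn (bigD1 (cls x)) /=; last first.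
  by apply/fset0Pn; exists x; rewrite !inE xA eqxx.
apply: (lt_le_trans (powR_gt0 (eta (cls x)) (bs_gt0 xA))); rewrite lerDl.
by apply: sumr_ge0 => j _; apply: powR_ge0.
Qed.
End Gen.

Section Main.
Variables (R : realType) (X : choiceType) (p : X -> {fset X} -> R) (K : nat)
  (cls : X -> 'I_K) (u : X -> R) (eta : 'I_K -> R).
Hypothesis rep : nested_logit_rep p cls u eta.

Lemma upos x : 0 < u x. Proof. by case: rep. Qed.
Lemma etapos j : 0 < eta j. Proof. by case: rep. Qed.

Local Notation bs := (block_sum cls u).

Lemma pE (A : {fset X}) x : x \in A ->
  p x A = powR (bs A (cls x)) (eta (cls x)) / Dn cls u eta A * (u x / bs A (cls x)).
Proof.
move=> xA; case: rep => _ _ _ H.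
have A0 : A != fset0 by apply/fset0Pn; exists x.
exact: (H A A0 x xA).
Qed.

Lemma pratio (A : {fset X}) x y : x \in A -> y \in A ->
  p x A / p y A = (powR (bs A (cls x)) (eta (cls x)) * (u x / bs A (cls x))) /
                  (powR (bs A (cls y)) (eta (cls y)) * (u y / bs A (cls y))).
Proof.
move=> xA yA; rewrite !pE //.
have D0 := Dn_gt0 cls upos eta xA.
have Sy := bs_gt0 cls upos yA. have Sx := bs_gt0 cls upos xA.
have Fy := powR_gt0 (eta (cls y)) Sy.
have uy := upos y.
field; rewrite ?gt_eqF //.
Qed.

Lemma p_one x : p x [fset x; x] = 1.
Proof.
have xA : x \in [fset x; x] by rewrite !inE eqxx.
have As : [fset x; x] =i [:: x] by move=> z; rewrite !inE orbb.
rewrite pE // (bs_list cls u _ _ As) // !big_cons big_nil eqxx addr0 /Dn.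
rewrite (sum1 _ (i:=cls x)); last by move=> j; rewrite (ne_list cls _ As) /= orbF eq_sym.
have Sx := upos x.
have F := powR_gt0 (eta (cls x)) Sx.
rewrite (bs_list cls u _ _ As) // !big_cons big_nil eqxx addr0.
by rewrite !divff ?mulr1 ?gt_eqF.
Qed.

Lemma pair_same x y : cls y = cls x -> x != y ->
  p x [fset x; y] = u x / (u x + u y).
Proof.
move=> cy xy.
have xA : x \in [fset x; y] by rewrite !inE eqxx.
have As : [fset x; y] =i [:: x; y] by move=> z; rewrite !inE.
have us : uniq [:: x; y] by rewrite /= !inE xy.
rewrite pE // /Dn (sum1 _ (i:=cls x)); last first.
  by move=> j; rewrite (ne_list cls _ As) /= orbF cy orbb eq_sym.
rewrite (bs_list cls u _ us As) !big_cons big_nil cy eqxx addr0.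
have F := powR_gt0 (eta (cls x)) (ltr_wpDr (ltW (upos y)) (upos x)).
by rewrite divff ?mul1r ?gt_eqF.
Qed.

Lemma p_two x c : cls x != cls c ->
  p x [fset x; c] = powR (u x) (eta (cls x)) /
     (powR (u x) (eta (cls x)) + powR (u c) (eta (cls c))).
Proof.
move=> nxc.
have xc : x != c by apply: contraNneq nxc => ->.
have ncx : (cls c == cls x) = false by rewrite eq_sym (negbTE nxc).
have xA : x \in [fset x; c] by rewrite !inE eqxx.
have As : [fset x; c] =i [:: x; c] by move=> z; rewrite !inE.
have us : uniq [:: x; c] by rewrite /= !inE xc.
rewrite pE // /Dn (sum2 _ nxc); last first.
  by move=> j; rewrite (ne_list cls _ As) /= orbF (eq_sym (cls x)) (eq_sym (cls c)).
rewrite !(bs_list cls u _ us As) !big_cons !big_nil !eqxx ncx (negbTE nxc) !addr0.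
by rewrite divff ?mulr1 ?gt_eqF ?upos.
Qed.

Lemma p_three x y c : cls y = cls x -> x != y -> cls x != cls c ->
  p x ([fset x; c] `|` [fset y]) =
    powR (u x + u y) (eta (cls x)) /
     (powR (u x + u y) (eta (cls x)) + powR (u c) (eta (cls c))) *
    (u x / (u x + u y)).
Proof.
move=> cy xy nxc.
have xc : x != c by apply: contraNneq nxc => ->.
have yc : y != c by apply: contraNneq nxc => <-; rewrite cy.
have ncx : (cls c == cls x) = false by rewrite eq_sym (negbTE nxc).
have xA : x \in [fset x; c] `|` [fset y] by rewrite !inE eqxx.
have As : [fset x; c] `|` [fset y] =i [:: x; c; y] by move=> z; rewrite !inE orbA.
have us : uniq [:: x; c; y] by rewrite /= !inE negb_or xc xy (eq_sym c) yc.
rewrite pE // /Dn (sum2 _ nxc); last first.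
  move=> j; rewrite (ne_list cls _ As) /= orbF cy (eq_sym (cls x)) (eq_sym (cls c)).
  by case: (j == cls x); case: (j == cls c).
rewrite !(bs_list cls u _ us As) !big_cons !big_nil cy !eqxx ?ncx ?(negbTE nxc).
by rewrite !addr0.
Qed.

Lemma no_cross x x' b : cls x' = cls x -> x != x' -> cls b != cls x ->
  1 < eta (cls x) -> ~ sim_p p x b.
Proof.
move=> cx' xx' nb eta1 sim.
have xb : x != b by apply: contraNneq nb => <-.
have bx' : b != x' by apply: contraNneq nb => ->; rewrite cx'.
have nbx : (cls b == cls x) = false by rewrite (negbTE nb).
have nxb : (cls x == cls b) = false by rewrite eq_sym (negbTE nb).
have As : [fset x; b; x'] =i [:: x; b; x'] by move=> z; rewrite !inE orbA.
have us : uniq [:: x; b; x'] by rewrite /= !inE negb_or xb xx' bx'.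
have Ps : [fset x; b] =i [:: x; b] by move=> z; rewrite !inE.
have ups : uniq [:: x; b] by rewrite /= !inE xb.
have H := sim [fset x; b; x'] ltac:(by rewrite !inE eqxx) ltac:(by rewrite !inE eqxx orbT).
rewrite !pratio ?inE ?eqxx ?orbT // in H.
move: H; rewrite !(bs_list cls u _ us As) !(bs_list cls u _ ups Ps).
rewrite !big_cons !big_nil eqxx nbx nxb cx' eqxx nxb !addr0.
have ub := upos b; have ux := upos x; have ux' := upos x'.
rewrite !eqxx (divff (lt0r_neq0 ub)) (divff (lt0r_neq0 ux)) !mulr1.
move=> /(congr1 (fun r => r * powR (u b) (eta (cls b)))).
rewrite !divfK ?gt_eqF ?powR_gt0 // => H.
set S := u x + u x' in H.
have S0 : 0 < S by rewrite /S addr_gt0.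
have eta0 : 0 < eta (cls x) by lra.
have e1 := @mulr_powRB1 _ S _ (ltW S0) eta0.
have e2 := @mulr_powRB1 _ (u x) _ (ltW ux) eta0.
rewrite -e1 -e2 in H.
have E : u x * powR S (eta (cls x) - 1) = u x * powR (u x) (eta (cls x) - 1).
  by rewrite -H; field; rewrite gt_eqF.
move/(mulfI (lt0r_neq0 ux)): E => E.
have eta1' : 0 < eta (cls x) - 1 by lra.
have lt : powR (u x) (eta (cls x) - 1) < powR S (eta (cls x) - 1).
  apply: (gt0_ltr_powR eta1').
  - by rewrite nnegrE ltW.
  - by rewrite nnegrE ltW.
  - by rewrite /S ltrDl.
by rewrite E ltxx in lt.
Qed.

Lemma key_ineq (q T C : R) : 2 < q -> 0 < T -> 0 < C -> q * T < (q - 2) * C ->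
  T / (T + C) < q * T / (q * T + C) * (1 / 2).
Proof.
move=> q2 T0 C0 h.
rewrite -subr_gt0.
have -> : q * T / (q * T + C) * (1 / 2) - T / (T + C) =
   T * ((q - 2) * C - q * T) / (2 * (q * T + C) * (T + C)).
  field; rewrite ?lt0r_neq0 // ?addr_gt0 // mulr_gt0 //; lra.
apply: divr_gt0; first by apply: mulr_gt0 => //; rewrite subr_gt0.
apply: mulr_gt0; last by rewrite addr_gt0.
apply: mulr_gt0 => //; rewrite addr_gt0 // mulr_gt0 //; lra.
Qed.

Lemma eta_le1 i a a' c : richness p -> regularity p ->
  cls a = i -> cls a' = i -> a != a' -> cls c != i -> eta i <= 1.
Proof.
move=> rich reg ca ca' aa' nc.
rewrite leNgt; apply/negP => eta1.
have claim : forall x b, cls x = i -> sim_p p x b -> cls b = i.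
  move=> x b cx sxb; case: (eqVneq (cls b) i) => // nb; exfalso.
  pose x' := if x == a then a' else a.
  have cx' : cls x' = cls x by rewrite /x'; case: ifP => _; rewrite cx.
  have xx' : x != x' by rewrite /x'; case: (eqVneq x a) => [->|] //.
  by apply: (no_cross cx' xx' _ _ sxb); rewrite cx.
set eta_i := eta i in eta1.
set C := powR (u c) (eta (cls c)).
have C0 : 0 < C by apply: powR_gt0; apply: upos.
set q := powR 2 eta_i.
have eta0 : 0 < eta_i by lra.
have q2 : 2 < q.
  have e := @mulr_powRB1 _ 2 _ (ler0n _ 2) eta0.
  have P1 : 1 < powR 2 (eta_i - 1).
    rewrite -[X in X < _](_ : powR 1 (eta_i - 1) = 1); last by rewrite powR1.
    apply: gt0_ltr_powR; rewrite ?nnegrE //; lra.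
  rewrite /q -e; lra.
set M := (q - 2) * C / q.
have q0 : 0 < q by lra.
have M0 : 0 < M by apply: divr_gt0 => //; apply: mulr_gt0 => //; lra.
set t := powR (M / 2) eta_i^-1.
have t0 : 0 < t by apply: powR_gt0; lra.
have tT : powR t eta_i = M / 2.
  by rewrite /t -powRrM mulVf ?lt0r_neq0 // powRr1 //; lra.
have ua := upos a.
set rho := u a / (u a + t).
have hrho : 0 < rho < 1.
  apply/andP; split; first by apply: divr_gt0 => //; apply: addr_gt0.
  by rewrite ltr_pdivrMr ?addr_gt0 // mul1r ltrDl.
case: (rich a rho hrho) => b [sab pab].
have cb := claim a b ca sab.
have ab : a != b.
  apply/eqP => e; rewrite -e p_one in pab; move: hrho; rewrite -pab; lra.
rewrite pair_same ?cb // in pab.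
have ub := upos b.
have ubt : u b = t.
  move/eqP: pab; rewrite eqr_div ?lt0r_neq0 ?addr_gt0 // => /eqP H.
  by have := mulfI (lt0r_neq0 ua) H => /addrI.
case: (rich b (1 / 2) ltac:(apply/andP; split; lra)) => y [sby pby].
have cy := claim b y cb sby.
have yb : b != y.
  by apply/eqP => e; rewrite -e p_one in pby; exact: half_neq1 pby.
rewrite pair_same ?cy ?cb // in pby.
have uy := upos y.
have uyt : u y = t.
  move/eqP: pby; rewrite eqr_div ?lt0r_neq0 ?addr_gt0 // => /eqP H.
  by rewrite (lin_half H).
have bc : cls b != cls c by rewrite cb eq_sym.
have := reg [fset b; c] ltac:(by apply/fset0Pn; exists b; rewrite !inE eqxx)
  b ltac:(by rewrite !inE eqxx) y.
have cyb : cls y = cls b by rewrite cy cb.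
rewrite (p_three cyb yb bc) (p_two bc) cb ubt uyt -/eta_i.
have -> : t + t = 2 * t by rewrite mulr2n mulrDl mul1r.
rewrite (powRM eta_i (ler0n _ 2) (ltW t0)) tT -/q -/C.
have -> : t / (2 * t) = 1 / 2 by field; rewrite lt0r_neq0.
apply/negP; rewrite -ltNge.
apply: key_ineq => //; first lra.
rewrite /M; have -> : q * ((q - 2) * C / q / 2) = (q - 2) * C / 2.
  by field; rewrite lt0r_neq0.
have : 0 < (q - 2) * C by apply: mulr_gt0 => //; lra.
lra.
Qed.
End Main.

Section Final.
Variables (R : realType) (X : choiceType) (K : nat) (cls : X -> 'I_K).

Lemma bs_single (f : X -> R) (A : {fset X}) j x0 : x0 \in A -> cls x0 = j ->
  (forall y, cls y = j -> y = x0) -> block_sum cls f A j = f x0.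
Proof.
move=> x0A cx0 H; rewrite /block_sum (big_rem x0) // cx0 eqxx.
rewrite big1_seq; first by rewrite /= addr0.
move=> z /andP[/eqP cz zr]; exfalso; move: zr; rewrite (H z cz).
by rewrite mem_rem_uniqF ?fset_uniq.
Qed.

Lemma bs_none (f : X -> R) (A : {fset X}) j : (forall y, y \in A -> cls y != j) ->
  block_sum cls f A j = 0.
Proof.
move=> H; rewrite /block_sum big1_seq // => z /andP[/eqP cz zA].
by move: (H z zA); rewrite cz eqxx.
Qed.
End Final.

Theorem proposition3 (R : realType) (X : choiceType) (p : X -> {fset X} -> R) :
  stochastic_choice p -> nested_logit p -> regularity p -> richness p ->
  random_utility_nested_logit p.
Proof.
move=> _ [K [cls [u [eta rep]]]] reg rich.
have upos := upos rep; have etapos := etapos rep.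
case: (pselect (exists c d, cls c != cls d)) => [[c [d ncd]] | allsame]; last first.
  have same : forall x y, cls x = cls y.
    move=> x y; case: (eqVneq (cls x) (cls y)) => // nxy.
    by exfalso; apply: allsame; exists x, y.
  exists K, cls, u, (fun _ => 1); split => //; split => //.
  - by case: rep.
  - move=> A A0 a aA.
    have HP : forall j, ([fset x in A | cls x == j] != fset0) = (j == cls a).
      move=> j; apply/fset0Pn/eqP => [[z]|->].
        by rewrite !inE => /andP[_ /eqP <-]; apply: same.
      by exists a; rewrite !inE aA eqxx.
    rewrite (pE rep aA) /Dn !(sum1 _ HP).
    have S0 := bs_gt0 cls upos aA.
    have F0 := powR_gt0 (eta (cls a)) S0.
    by rewrite powRr1 ?(ltW S0) // !divff ?lt0r_neq0.
pose eta' := fun j => if eta j <= 1 then eta j else 1.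
pose u' := fun x => if eta (cls x) <= 1 then u x else powR (u x) (eta (cls x)).
have single : forall j, ~~ (eta j <= 1) -> forall x y, cls x = j -> cls y = j -> y = x.
  move=> j ej x y cx cy; apply/eqP; apply: contraNT ej => yx.
  pose e := if cls c == j then d else c.
  have ce : cls e != j.
    rewrite /e; case: (eqVneq (cls c) j) => [cj|ncj] /=; last done.
    by rewrite -cj eq_sym.
  by apply: (eta_le1 rep rich reg cx cy _ ce); rewrite eq_sym.
have u'pos : forall x, 0 < u' x.
  by move=> x; rewrite /u'; case: ifP => _; [apply: upos | apply: powR_gt0; apply: upos].
exists K, cls, u', eta'; split; last by move=> j; rewrite /eta'; case: ifP.
split => //.
- by case: rep.
- by move=> j; rewrite /eta'; case: ifP.
move=> A A0 a aA.
have E1 : forall j, powR (block_sum cls u' A j) (eta' j) = powR (block_sum cls u A j) (eta j).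
  move=> j; rewrite /eta'; case: ifP => ej.
    congr powR; apply: eq_bigr => x /eqP cx; by rewrite /u' cx ej.
  rewrite powRr1; last exact: bs_ge0.
  case: (pselect (exists x0, x0 \in A /\ cls x0 = j)) => [[x0 [x0A cx0]] | nx].
    have sj : forall y, cls y = j -> y = x0 := fun y cy => single j (negbT ej) x0 y cx0 cy.
    by rewrite !(bs_single _ x0A cx0 sj) /u' cx0 ej.
  have ny : forall y, y \in A -> cls y != j.
    by move=> y yA; apply/eqP => cy; apply: nx; exists y.
  by rewrite !(bs_none _ ny) powR0 // lt0r_neq0.
have E2 : u' a / block_sum cls u' A (cls a) = u a / block_sum cls u A (cls a).
  case: (boolP (eta (cls a) <= 1)) => ea.
    congr (_ / _); first by rewrite /u' ea.
    by apply: eq_bigr => x /eqP cx; rewrite /u' cx ea.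
  have sj : forall y, cls y = cls a -> y = a :=
    fun y cy => single (cls a) ea a y erefl cy.
  rewrite !(bs_single _ aA erefl sj) !divff // lt0r_neq0 //.
rewrite E2 (pE rep aA) /Dn; congr (_ / _ * _); first by rewrite E1.
by apply: eq_bigr => j _; rewrite E1.
Qed.
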